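(* Let $C$ be a circle in the plane, let $p,r$ be points on $C$, and let $q$ be a point in the open disk bounded by $C$. Suppose the ordered triple $(p,q,r)$ makes a clockwise (resp. counterclockwise) turn. Let $\gamma$ be a simple piecewise-linear path that starts at $p$, passes through $q$, ends at $r$, and meets $C$ only at $p$ and $r$. Then $\gamma$ has at least one clockwise (resp. counterclockwise) vertex, i.e. a vertex at which the path turns clockwise (resp. counterclockwise). *)

(* Defs.v *)
From Stdlib Require Import Reals Lra List.
Import ListNotations.
Open Scope R_scope.

Definition point : Type := (R * R)%type.
Definition px (a : point) : R := fst a.
Definition py (a : point) : R := snd a.

(* Twice the signed area of the triangle (a,b,c):
   > 0 counterclockwise turn, < 0 clockwise turn, = 0 collinear. *)
Definition orient (a b c : point) : R :=
  (px b - px a) * (py c - py a) - (py b - py a) * (px c - px a).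

Definition cw_turn (a b c : point) : Prop := orient a b c < 0.
Definition ccw_turn (a b c : point) : Prop := orient a b c > 0.

Definition dist2 (a b : point) : R :=
  (px a - px b) ^ 2 + (py a - py b) ^ 2.

(* circle with center c and radius rho (rho > 0 assumed separately) *)
Definition on_circle (c : point) (rho : R) (x : point) : Prop :=
  dist2 x c = rho ^ 2.
Definition in_open_disk (c : point) (rho : R) (x : point) : Prop :=
  dist2 x c < rho ^ 2.

Definition on_segment (a b x : point) : Prop :=
  exists t : R, 0 <= t <= 1 /\
    x = (px a + t * (px b - px a), py a + t * (py b - py a)).

(* A piecewise-linear path is given by its list of vertices vs = [v_0; ...; v_{n-1}],
   n >= 2; its segments are [v_i, v_{i+1}] for i + 1 < n. *)
Definition vtx (vs : list point) (i : nat) : point := nth i vs (0, 0).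

Definition on_path (vs : list point) (x : point) : Prop :=
  exists i : nat, (S i < length vs)%nat /\ on_segment (vtx vs i) (vtx vs (S i)) x.

Definition simple_path (vs : list point) : Prop :=
  (2 <= length vs)%nat /\
  (forall i, (S i < length vs)%nat -> vtx vs i <> vtx vs (S i)) /\
  (forall i j x, (i < j)%nat -> (S j < length vs)%nat ->
     on_segment (vtx vs i) (vtx vs (S i)) x ->
     on_segment (vtx vs j) (vtx vs (S j)) x ->
     j = S i /\ x = vtx vs j).

Definition has_cw_vertex (vs : list point) : Prop :=
  exists i : nat, (0 < i)%nat /\ (S i < length vs)%nat /\
    cw_turn (vtx vs (pred i)) (vtx vs i) (vtx vs (S i)).
Definition has_ccw_vertex (vs : list point) : Prop :=
  exists i : nat, (0 < i)%nat /\ (S i < length vs)%nat /\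
    ccw_turn (vtx vs (pred i)) (vtx vs i) (vtx vs (S i)).

(* Main.v *)
Require Import Defs.
From Stdlib Require Import Reals Lra List Lia Psatz Arith Wf_nat Classical.
Import ListNotations.
Open Scope R_scope.

Lemma pt_eq (x y : point) : px x = px y -> py x = py y -> x = y.
Proof. destruct x, y; unfold px, py; simpl; intros; subst; reflexivity. Qed.

Definition lerp (u w : point) (t : R) : point :=
  (px u + t * (px w - px u), py u + t * (py w - py u)).

Lemma px_lerp u w t : px (lerp u w t) = px u + t * (px w - px u). Proof. reflexivity. Qed.
Lemma py_lerp u w t : py (lerp u w t) = py u + t * (py w - py u). Proof. reflexivity. Qed.

Lemma seg_elim u w x : on_segment u w x -> exists t, 0 <= t <= 1 /\ x = lerp u w t.
Proof. intros [t [Ht E]]. exists t. split; [exact Ht| exact E]. Qed.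
Lemma seg_intro u w x t : 0 <= t <= 1 -> x = lerp u w t -> on_segment u w x.
Proof. intros Ht E. exists t. split; [exact Ht| exact E]. Qed.

Lemma lerp0 u w : lerp u w 0 = u.
Proof. apply pt_eq; rewrite ?px_lerp, ?py_lerp; ring. Qed.
Lemma lerp1 u w : lerp u w 1 = w.
Proof. apply pt_eq; rewrite ?px_lerp, ?py_lerp; ring. Qed.

Lemma seg_start u w : on_segment u w u.
Proof. apply seg_intro with 0; [lra| now rewrite lerp0]. Qed.
Lemma seg_end u w : on_segment u w w.
Proof. apply seg_intro with 1; [lra| now rewrite lerp1]. Qed.

Lemma lerp_inj u w t t' : u <> w -> lerp u w t = lerp u w t' -> t = t'.
Proof.
  intros Hne E.
  assert (E1 := f_equal px E). assert (E2 := f_equal py E).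
  rewrite !px_lerp in E1. rewrite !py_lerp in E2.
  destruct (Req_dec (px w - px u) 0) as [H1|H1].
  - destruct (Req_dec (py w - py u) 0) as [H2|H2].
    + exfalso; apply Hne; apply pt_eq; lra.
    + apply Rmult_eq_reg_r with (py w - py u); [lra|auto].
  - apply Rmult_eq_reg_r with (px w - px u); [lra|auto].
Qed.

Lemma orient_lerp3 a b u w t :
  orient a b (lerp u w t) = (1 - t) * orient a b u + t * orient a b w.
Proof. unfold orient; rewrite px_lerp, py_lerp; ring. Qed.

Lemma orient_lerp2 a u w c t :
  orient a (lerp u w t) c = (1 - t) * orient a u c + t * orient a w c.
Proof. unfold orient; rewrite px_lerp, py_lerp; ring. Qed.

Lemma lerp_lerp u w t s : lerp u (lerp u w t) s = lerp u w (s * t).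
Proof. apply pt_eq; rewrite ?px_lerp, ?py_lerp; ring. Qed.

Lemma seg_sub u w t x : 0 <= t <= 1 -> on_segment u (lerp u w t) x -> on_segment u w x.
Proof.
  intros Ht Hs. destruct (seg_elim _ _ _ Hs) as [s [Hs1 ->]].
  rewrite lerp_lerp. apply seg_intro with (s*t); [nra|reflexivity].
Qed.

Definition onp (f : nat -> point) (n : nat) (x : point) : Prop :=
  exists i, (S i < n)%nat /\ on_segment (f i) (f (S i)) x.
Definition simp (f : nat -> point) (n : nat) : Prop :=
  (2 <= n)%nat /\ (forall i, (S i < n)%nat -> f i <> f (S i)) /\
  (forall i j x, (i < j)%nat -> (S j < n)%nat ->
     on_segment (f i) (f (S i)) x -> on_segment (f j) (f (S j)) x -> j = S i /\ x = f j).
Definition lturn (f : nat -> point) (n : nat) : Prop :=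
  forall i, (0 < i)%nat -> (S i < n)%nat -> orient (f (pred i)) (f i) (f (S i)) >= 0.
Definition convexK (K : point -> Prop) : Prop :=
  forall x y t, K x -> K y -> 0 <= t <= 1 -> K (lerp x y t).
Definition EP (K : point -> Prop) (e : point) : Prop :=
  forall y t, K y -> 0 < t <= 1 -> K (lerp e y t).

Lemma EP_in K e : convexK K -> K e -> EP K e.
Proof. intros HK He y t Hy Ht. apply HK; auto; lra. Qed.

Lemma start_only f n j : simp f n -> (S j < n)%nat ->
  on_segment (f j) (f (S j)) (f O) -> j = 0%nat.
Proof.
  intros [H2 [Hd Hs]] Hj Hseg. destruct j as [|j]; auto.
  destruct (Hs 0%nat (S j) (f O)) as [E1 E2]; auto; try lia.
  apply seg_start. exfalso. injection E1 as ->. apply (Hd 0%nat); auto; lia.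
Qed.

Lemma end_only f n j : simp f n -> (S j < n)%nat ->
  on_segment (f j) (f (S j)) (f (pred n)) -> S j = pred n.
Proof.
  intros [H2 [Hd Hs]] Hj Hseg.
  destruct (Nat.eq_dec (S j) (pred n)) as [E|E]; auto. exfalso.
  assert (Hlt : (j < n - 2)%nat) by lia.
  destruct (Hs j (n-2)%nat (f (pred n))) as [E1 E2]; auto; try lia.
  replace (S (n-2)) with (pred n) by lia. apply seg_end.
  apply (Hd (n-2)%nat); try lia. rewrite <- E2. f_equal. lia.
Qed.

Lemma min_ex (P : nat -> Prop) : (exists i, P i) -> exists i, P i /\ forall j, (j < i)%nat -> ~ P j.
Proof.
  intros [i Hi]. induction i as [i IH] using lt_wf_ind.
  destruct (classic (exists j, (j < i)%nat /\ P j)) as [[j [Hj Pj]]|Hn].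
  - apply (IH j Hj Pj).
  - exists i. split; auto. intros j Hj Pj. apply Hn; eauto.
Qed.

Lemma collinear_cases a b c : a <> b -> b <> c -> orient a b c = 0 ->
  (exists m, 0 < m < 1 /\ b = lerp a c m) \/
  (exists t, 0 <= t < 1 /\ c = lerp a b t) \/
  (exists t, 0 < t < 1 /\ a = lerp b c t).
Proof.
  intros Hab Hbc Ho.
  set (ex := px b - px a). set (ey := py b - py a).
  set (dx := px c - px b). set (dy := py c - py b).
  assert (Hee : ex*ex + ey*ey > 0).
  { destruct (Req_dec ex 0); destruct (Req_dec ey 0); try nra.
    exfalso; apply Hab; apply pt_eq; unfold ex, ey in *; lra. }
  assert (Hcr : ex * dy - ey * dx = 0).
  { unfold orient in Ho; unfold ex, ey, dx, dy; lra. }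
  set (l := (dx*ex + dy*ey) / (ex*ex + ey*ey)).
  assert (Hx : dx = l * ex).
  { unfold l. field_simplify_eq; [|lra].
    assert (ey*(ex*dy - ey*dx) = 0) by (rewrite Hcr; ring).
    assert (ex*(ex*dy - ey*dx) = 0) by (rewrite Hcr; ring). lra. }
  assert (Hy : dy = l * ey).
  { unfold l. field_simplify_eq; [|lra].
    assert (ey*(ex*dy - ey*dx) = 0) by (rewrite Hcr; ring).
    assert (ex*(ex*dy - ey*dx) = 0) by (rewrite Hcr; ring). lra. }
  assert (Ecx : px c - px a = (1+l)*ex) by (unfold dx, ex in *; lra).
  assert (Ecy : py c - py a = (1+l)*ey) by (unfold dy, ey in *; lra).
  assert (Ebx : px b = px a + ex) by (unfold ex; lra).
  assert (Eby : py b = py a + ey) by (unfold ey; lra).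
  assert (Ecx' : px c = px b + l*ex) by (unfold dx in *; lra).
  assert (Ecy' : py c = py b + l*ey) by (unfold dy in *; lra).
  clearbody ex ey dx dy l.
  destruct (Rlt_le_dec 0 l) as [Hl|Hl].
  - left. exists (1/(1+l)). split. split.
    + apply Rdiv_lt_0_compat; lra.
    + apply Rmult_lt_reg_r with (1+l); [lra|]. field_simplify; lra.
    + apply pt_eq; rewrite ?px_lerp, ?py_lerp.
      * rewrite Ecx, Ebx. field. lra.
      * rewrite Ecy, Eby. field. lra.
  - destruct (Req_dec l 0) as [H0|H0].
    { exfalso. apply Hbc. apply pt_eq; rewrite H0 in *; lra. }
    destruct (Rle_lt_dec (-1) l) as [Hl1|Hl1].
    + right; left. exists (1 + l). split; [lra|].
      apply pt_eq; rewrite ?px_lerp, ?py_lerp; [rewrite Ebx; lra | rewrite Eby; lra].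
    + right; right. exists (-1/l).
      replace (-1/l) with (/ (-l)) by (field; lra). split. split.
      * apply Rinv_0_lt_compat; lra.
      * apply Rmult_lt_reg_r with (-l); [lra|]. rewrite Rinv_l; lra.
      * apply pt_eq; rewrite ?px_lerp, ?py_lerp.
        -- rewrite Ecx', Ebx. field. lra.
        -- rewrite Ecy', Eby. field. lra.
Qed.

Lemma seg_split u w m x : 0 < m < 1 -> on_segment u w x ->
  on_segment u (lerp u w m) x \/ on_segment (lerp u w m) w x.
Proof.
  intros Hm Hs. destruct (seg_elim _ _ _ Hs) as [t [Ht ->]].
  destruct (Rle_lt_dec t m).
  - left. apply seg_intro with (t/m).
    + split. apply Rmult_le_pos; [lra| left; apply Rinv_0_lt_compat; lra].
      apply Rmult_le_reg_r with m; [lra|]. unfold Rdiv. rewrite Rmult_assoc, Rinv_l; lra.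
    + apply pt_eq; rewrite ?px_lerp, ?py_lerp; field; lra.
  - right. apply seg_intro with ((t-m)/(1-m)).
    + split. apply Rmult_le_pos; [lra| left; apply Rinv_0_lt_compat; lra].
      apply Rmult_le_reg_r with (1-m); [lra|]. unfold Rdiv. rewrite Rmult_assoc, Rinv_l; lra.
    + apply pt_eq; rewrite ?px_lerp, ?py_lerp; field; lra.
Qed.

Lemma seg_sub2 u w m x : 0 <= m <= 1 -> on_segment (lerp u w m) w x -> on_segment u w x.
Proof.
  intros Hm Hs. destruct (seg_elim _ _ _ Hs) as [s [Hs1 ->]].
  apply seg_intro with (m + s*(1-m)); [nra|].
  apply pt_eq; rewrite ?px_lerp, ?py_lerp; ring.
Qed.

Section Merge.
Variable f : nat -> point.
Variable n : nat.
Definition mg (k : nat) : point := match k with O => f O | S k' => f (S (S k')) end.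

Lemma merge_ok m : simp f n -> (3 <= n)%nat -> 0 < m < 1 -> f 1%nat = lerp (f O) (f 2%nat) m ->
  lturn f n ->
  simp mg (pred n) /\ lturn mg (pred n) /\ (forall x, onp mg (pred n) x <-> onp f n x) /\
  mg O = f O /\ mg (pred (pred n)) = f (pred n).
Proof.
  intros Hs Hn Hm E1 Hl. destruct Hs as [H2 [Hd Hss]].
  assert (Hseg0 : forall x, on_segment (f O) (f 2%nat) x ->
            on_segment (f O) (f 1%nat) x \/ on_segment (f 1%nat) (f 2%nat) x).
  { intros x Hx. rewrite E1. apply seg_split; auto. }
  assert (Hseg0' : forall x, on_segment (f O) (f 1%nat) x \/ on_segment (f 1%nat) (f 2%nat) x ->
            on_segment (f O) (f 2%nat) x).
  { intros x [Hx|Hx]; rewrite E1 in Hx; [eapply seg_sub|eapply seg_sub2]; eauto; lra. }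
  assert (Hon : forall x, onp mg (pred n) x <-> onp f n x).
  { intros x; split.
    - intros [i [Hi Hx]]. destruct i as [|i]; simpl in Hx.
      + destruct (Hseg0 x Hx) as [H|H]; [exists O|exists 1%nat]; split; auto; lia.
      + exists (S (S i)). split; auto. lia.
    - intros [i [Hi Hx]]. destruct i as [|[|i]].
      + exists O; split; [lia|simpl; auto].
      + exists O; split; [lia|simpl; auto].
      + exists (S i); split; [lia|simpl; auto]. }
  split; [|split; [|split; [exact Hon| split; [reflexivity|]]]].
  - split; [lia|split].
    + intros i Hi. destruct i as [|i]; simpl.
      * intro E. apply (Hd O); [lia|]. rewrite E1, E. apply pt_eq; rewrite ?px_lerp, ?py_lerp; ring.
      * apply Hd; lia.
    + intros i j x Hij Hj Hx1 Hx2. destruct j as [|j]; [lia|]. simpl in Hx2.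
      destruct i as [|i]; simpl in Hx1.
      * destruct (Hseg0 x Hx1) as [H|H].
        -- destruct (Hss O (S (S j)) x) as [E _]; auto; lia.
        -- destruct (Hss 1%nat (S (S j)) x) as [E E']; auto; try lia;
           try (split; [lia| rewrite E'; simpl; f_equal; lia]).
      * destruct (Hss (S (S i)) (S (S j)) x) as [E E']; auto; try lia;
        try (split; [lia| rewrite E'; reflexivity]).
  - intros i Hi Hi2. destruct i as [|[|i]]; [lia| |].
    + simpl. assert (H := Hl 2%nat ltac:(lia) ltac:(lia)). simpl in H.
      rewrite E1 in H. unfold orient in *. rewrite ?px_lerp, ?py_lerp in H.
      assert (H' : (1 - m) * ((px (f 2%nat) - px (f O)) * (py (f 3%nat) - py (f O)) -
         (py (f 2%nat) - py (f O)) * (px (f 3%nat) - px (f O))) >= 0).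
      { eapply Rge_trans; [|exact H]. right. ring. }
      destruct (Rle_lt_dec 0 ((px (f 2%nat) - px (f O)) * (py (f 3%nat) - py (f O)) -
         (py (f 2%nat) - py (f O)) * (px (f 3%nat) - px (f O)))); [lra|nra].
    + simpl. apply (Hl (S (S (S i)))); lia.
  - destruct n as [|[|[|k]]]; try lia. simpl. reflexivity.
Qed.
End Merge.

Lemma orient_aa a b : orient a b b = 0.
Proof. unfold orient; ring. Qed.
Lemma orient_a0 a b : orient a a b = 0.
Proof. unfold orient; ring. Qed.

Lemma on_line a b z : a <> b -> orient a b z = 0 -> exists s, z = lerp a b s.
Proof.
  intros Hab Ho.
  set (ex := px b - px a). set (ey := py b - py a).
  assert (Hee : ex*ex + ey*ey > 0).
  { destruct (Req_dec ex 0); destruct (Req_dec ey 0); try nra.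
    exfalso; apply Hab; apply pt_eq; unfold ex, ey in *; lra. }
  set (wx := px z - px a). set (wy := py z - py a).
  assert (Hcr : ex * wy - ey * wx = 0) by (unfold orient in Ho; unfold ex, ey, wx, wy; lra).
  exists ((wx*ex + wy*ey)/(ex*ex+ey*ey)).
  assert (Ebx : px b - px a = ex) by reflexivity. assert (Eby : py b - py a = ey) by reflexivity.
  assert (Ezx : px z = px a + wx) by (unfold wx; ring). assert (Ezy : py z = py a + wy) by (unfold wy; ring).
  clearbody ex ey wx wy.
  apply pt_eq; rewrite ?px_lerp, ?py_lerp.
  - rewrite Ebx, Ezx. field_simplify_eq; [|lra].
    assert (ey*(ex*wy - ey*wx) = 0) by (rewrite Hcr; ring). lra.
  - rewrite Eby, Ezy. field_simplify_eq; [|lra].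
    assert (ex*(ex*wy - ey*wx) = 0) by (rewrite Hcr; ring). lra.
Qed.

Lemma bary K a u x b : convexK K -> EP K a -> K u -> K x -> orient a u x > 0 ->
  orient a u b > 0 -> orient u x b >= 0 -> orient a x b < 0 -> K b.
Proof.
  intros HK Ea Ku Kx HD Hg Ha Hb.
  assert (Hsum : orient u x b + (- orient a x b) + orient a u b = orient a u x)
    by (unfold orient; ring).
  remember (orient a u x) as D. remember (- orient a x b) as be.
  remember (orient a u b) as ga. remember (orient u x b) as al.
  assert (Hbg : be + ga > 0) by lra.
  assert (Ky : K (lerp u x (ga/(be+ga)))).
  { apply HK; auto. split.
    - apply Rmult_le_pos; [lra| left; apply Rinv_0_lt_compat; lra].
    - apply Rmult_le_reg_r with (be+ga); [lra|]. unfold Rdiv.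
      rewrite Rmult_assoc, Rinv_l; lra. }
  assert (Kb : K (lerp a (lerp u x (ga/(be+ga))) ((be+ga)/D))).
  { apply Ea; auto. split.
    - apply Rdiv_lt_0_compat; lra.
    - apply Rmult_le_reg_r with D; [lra|]. unfold Rdiv.
      rewrite Rmult_assoc, Rinv_l; lra. }
  replace b with (lerp a (lerp u x (ga/(be+ga))) ((be+ga)/D)); auto.
  assert (HD0 : D <> 0) by lra. assert (Hbg0 : be + ga <> 0) by lra.
  subst D be ga al.
  apply pt_eq; rewrite ?px_lerp, ?py_lerp; unfold orient in *; field; auto.
Qed.

Lemma simp_shift f n : simp f n -> (3 <= n)%nat -> simp (fun k => f (S k)) (pred n).
Proof.
  intros [H2 [Hd Hs]] Hn. split; [lia|split].
  - intros i Hi; apply Hd; lia.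
  - intros i j x Hij Hj H1 H2'. destruct (Hs (S i) (S j) x) as [E E']; auto; lia.
Qed.

Lemma lturn_shift f n : lturn f n -> lturn (fun k => f (S k)) (pred n).
Proof.
  intros Hl i Hi Hi2. destruct i as [|i]; [lia|]. simpl.
  apply (Hl (S (S i))); lia.
Qed.

Definition Qp (f : nat -> point) (i : nat) (z : point) (k : nat) : point :=
  if (k <? i)%nat then f (S k) else z.

Lemma QpL f i z k : (k < i)%nat -> Qp f i z k = f (S k).
Proof. intros H. unfold Qp. destruct (Nat.ltb_spec k i); [reflexivity|lia]. Qed.
Lemma QpG f i z k : (i <= k)%nat -> Qp f i z k = z.
Proof. intros H. unfold Qp. destruct (Nat.ltb_spec k i); [lia|reflexivity]. Qed.

Section Step1.
Variables (f : nat -> point) (n i : nat) (t0 : R).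
Hypothesis Hs : simp f n.
Hypothesis Hi : (2 <= i)%nat.
Hypothesis Hin : (S i < n)%nat.
Hypothesis Ht0 : 0 < t0 <= 1.
Let z := lerp (f i) (f (S i)) t0.

Lemma Qseg k x : (k < i)%nat -> on_segment (Qp f i z k) (Qp f i z (S k)) x ->
  on_segment (f (S k)) (f (S (S k))) x.
Proof.
  intros Hk Hx. rewrite QpL in Hx by lia.
  destruct (Nat.eq_dec (S k) i) as [E|E].
  - rewrite QpG in Hx by lia. unfold z in Hx. rewrite <- E in Hx.
    eapply seg_sub; [|exact Hx]. lra.
  - rewrite QpL in Hx by lia. exact Hx.
Qed.

Lemma Q_simp : simp (Qp f i z) (S i).
Proof.
  destruct Hs as [H2 [Hd Hss]]. split; [lia|split].
  - intros k Hk. rewrite QpL by lia.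
    destruct (Nat.eq_dec (S k) i) as [E|E].
    + rewrite QpG by lia. unfold z. rewrite <- E. intro E2.
      rewrite <- (lerp0 (f (S k)) (f (S (S k)))) in E2 at 1.
      apply lerp_inj in E2; [lra|]. apply Hd; lia.
    + rewrite QpL by lia. apply Hd; lia.
  - intros k l x Hkl Hl H1 H2'.
    apply Qseg in H1; [|lia]. apply Qseg in H2'; [|lia].
    destruct (Hss (S k) (S l) x) as [E E']; auto; try lia.
    split; [lia|]. rewrite QpL by lia. exact E'.
Qed.

Lemma Q_lturn : lturn f n -> lturn (Qp f i z) (S i).
Proof.
  intros Hl k Hk Hk2. rewrite (QpL _ _ _ (pred k)) by lia. rewrite (QpL _ _ _ k) by lia.
  destruct (Nat.eq_dec (S k) i) as [E|E].
  - rewrite QpG by lia. unfold z. rewrite <- E. rewrite orient_lerp3, orient_aa.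
    assert (H := Hl (S k) ltac:(lia) ltac:(lia)). simpl in H.
    replace (S (pred k)) with k by lia. nra.
  - rewrite QpL by lia. replace (S (pred k)) with k by lia.
    assert (H := Hl (S k) ltac:(lia) ltac:(lia)). simpl in H. exact H.
Qed.
End Step1.

Definition CoreP (n : nat) : Prop := forall f K, simp f n -> lturn f n -> convexK K ->
  EP K (f O) -> EP K (f (pred n)) -> ~ K (f O) -> ~ K (f (pred n)) ->
  (forall x, onp f n x -> x <> f O -> x <> f (pred n) -> K x) ->
  forall x, onp f n x -> orient (f O) x (f (pred n)) >= 0.

Lemma half_convex K a b : convexK K -> convexK (fun y => K y /\ orient a b y > 0).
Proof.
  intros HK x y t [Kx Ox] [Ky Oy] Ht. split; [apply HK; auto|].
  rewrite orient_lerp3. destruct (Req_dec t 0); [subst; lra| nra].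
Qed.

Lemma EP_half K a b e : EP K e -> orient a b e >= 0 -> EP (fun y => K y /\ orient a b y > 0) e.
Proof.
  intros HE Oe y t [Ky Oy] Ht. split; [apply HE; auto|].
  rewrite orient_lerp3. nra.
Qed.

Lemma core_pos n (IH : forall m, (m < n)%nat -> CoreP m) f K :
  simp f n -> lturn f n -> convexK K ->
  EP K (f O) -> EP K (f (pred n)) -> ~ K (f O) -> ~ K (f (pred n)) ->
  (forall x, onp f n x -> x <> f O -> x <> f (pred n) -> K x) ->
  (3 <= n)%nat -> orient (f O) (f 1%nat) (f 2%nat) > 0 ->
  forall x, onp f n x -> orient (f O) x (f (pred n)) >= 0.
Proof.
  intros Hs Hl HK Ea Eb Na Nb Hin Hn O12.
  pose proof Hs as [H2 [Hd Hss]].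
  assert (Hf01 : f O <> f 1%nat) by (apply Hd; lia).
  assert (Hf1b : f 1%nat <> f (pred n)).
  { intro E. assert (HH := end_only f n O Hs ltac:(lia)). rewrite <- E in HH.
    specialize (HH (seg_end _ _)). lia. }
  assert (K1 : K (f 1%nat)).
  { apply Hin; auto. exists O; split; [lia|apply seg_end]. }
  assert (St1 : forall i x, (1 <= i)%nat -> (S i < n)%nat -> on_segment (f i) (f (S i)) x ->
            x <> f 1%nat -> orient (f O) (f 1%nat) x > 0).
  { destruct (classic (exists i, (1 <= i)%nat /\ (S i < n)%nat /\ exists x,
        on_segment (f i) (f (S i)) x /\ x <> f 1%nat /\ orient (f O) (f 1%nat) x <= 0))
      as [Hex|Hnex].
    2:{ intros i x H1 H3 H4 H5. apply Rnot_le_lt. intro H6. apply Hnex. exists i; eauto 8. }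
    exfalso.
    destruct (min_ex _ Hex) as [i [[Hi1 [Hi2 [x0 [Hx0 [Hx01 Hox0]]]]] Hmin]].
    destruct (seg_elim _ _ _ Hx0) as [t1 [Ht1 Ex0]].
    assert (Hi : (2 <= i)%nat).
    { destruct (Nat.eq_dec i 1) as [->|]; [|lia]. exfalso.
      rewrite Ex0, orient_lerp3, orient_aa in Hox0.
      destruct (Req_dec t1 0) as [->|Ht0]. apply Hx01. rewrite Ex0, lerp0. reflexivity. nra. }
    assert (Hfi1 : f i <> f 1%nat).
    { intro E. destruct (Hss O i (f 1%nat)) as [E1 _]; auto; try lia. apply seg_end.
      rewrite <- E; apply seg_start. }
    assert (h0p : orient (f O) (f 1%nat) (f i) > 0).
    { apply Rnot_le_lt. intro H. apply (Hmin (pred i)); [lia|].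
      split; [lia|split; [lia|]]. exists (f i). split; [|auto].
      replace (S (pred i)) with i by lia. apply seg_end. }
    remember (orient (f O) (f 1%nat) (f i)) as h0.
    remember (orient (f O) (f 1%nat) (f (S i))) as h1.
    assert (Hox0' : (1 - t1) * h0 + t1 * h1 <= 0) by (rewrite Ex0, orient_lerp3 in Hox0; subst; lra).
    assert (Hdh : h0 - h1 > 0) by nra.
    remember (h0 / (h0 - h1)) as t0.
    assert (Ht0 : 0 < t0 <= 1).
    { subst t0. split. apply Rdiv_lt_0_compat; lra.
      apply Rmult_le_reg_r with (h0 - h1); [lra|]. unfold Rdiv.
      rewrite Rmult_assoc, Rinv_l; nra. }
    remember (lerp (f i) (f (S i)) t0) as z.
    assert (Oz : orient (f O) (f 1%nat) z = 0).
    { subst z. rewrite orient_lerp3. rewrite <- Heqh0, <- Heqh1. subst t0. field. lra. }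
    assert (Obelow : forall s, 0 <= s < t0 -> orient (f O) (f 1%nat) (lerp (f i) (f (S i)) s) > 0).
    { intros s Hs'. rewrite orient_lerp3, <- Heqh0, <- Heqh1.
      assert (t0 * (h0 - h1) = h0) by (subst t0; field; lra). nra. }
    assert (Zseg : on_segment (f i) (f (S i)) z) by (apply seg_intro with t0; auto; lra).
    assert (Zne0 : z <> f O).
    { intro E. rewrite E in Zseg. apply (start_only f n) in Zseg; auto. lia. }
    assert (EPz : EP K z).
    { destruct (classic (z = f (pred n))) as [E|E]. rewrite E; auto.
      apply EP_in; auto. apply Hin; auto. exists i; split; auto. }
    assert (QS := Q_simp f n i t0 Hs Hi Hi2 Ht0).
    assert (QL := Q_lturn f n i t0 Hi Hi2 Ht0 Hl).
    rewrite <- Heqz in QS, QL.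
    assert (Q0 : Qp f i z O = f 1%nat) by (apply QpL; lia).
    assert (Qe : Qp f i z (pred (S i)) = z) by (apply QpG; lia).
    assert (Hc := IH (S i) ltac:(lia) (Qp f i z) (fun y => K y /\ orient (f O) (f 1%nat) y > 0)
                  QS QL (half_convex K _ _ HK)).
    rewrite Q0, Qe in Hc.
    assert (Hc2 : orient (f 1%nat) (f 2%nat) z >= 0).
    { replace (f 2%nat) with (Qp f i z 1%nat) by (apply QpL; lia).
      apply Hc.
      - apply EP_half. apply EP_in; auto. rewrite orient_aa; lra.
      - apply EP_half; auto. lra.
      - intros [_ H]. rewrite orient_aa in H. lra.
      - intros [_ H]. lra.
      - intros y [k [Hk Hy]] Hy1 Hyz.
        destruct (Nat.eq_dec (S k) i) as [E|E].
        + rewrite (QpL _ _ _ k), (QpG _ _ _ (S k)) in Hy by lia.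
          rewrite Heqz in Hy. rewrite <- E in Hy, Heqz.
          destruct (seg_elim _ _ _ Hy) as [s [Hs1 Ey]].
          rewrite lerp_lerp in Ey.
          assert (Hs2 : s < 1).
          { destruct (Req_dec s 1) as [->|]; [|lra]. exfalso. apply Hyz. rewrite Ey, Heqz. f_equal. ring. }
          rewrite <- E in Obelow. split.
          * apply Hin.
            -- exists (S k). split; [lia|]. rewrite Ey. apply seg_intro with (s*t0); [nra|reflexivity].
            -- intro E0. rewrite E0 in Ey. assert (HH := start_only f n (S k) Hs ltac:(lia)).
               rewrite Ey in HH. specialize (HH ltac:(apply seg_intro with (s*t0); [nra|reflexivity])). lia.
            -- intro E0. assert (HH := end_only f n (S k) Hs ltac:(lia)).
               assert (Hy' : on_segment (f (S k)) (f (S (S k))) (f (pred n)))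
                 by (rewrite <- E0, Ey; apply seg_intro with (s*t0); [nra|reflexivity]).
               specialize (HH Hy'). rewrite E0, <- HH in Ey.
               rewrite <- (lerp1 (f (S k)) (f (S (S k)))) in Ey at 1.
               apply lerp_inj in Ey; [nra| apply Hd; lia].
          * rewrite Ey. apply Obelow. nra.
        + rewrite (QpL _ _ _ k), (QpL _ _ _ (S k)) in Hy by lia.
          split.
          * apply Hin.
            -- exists (S k). split; [lia|auto].
            -- intro E0. rewrite E0 in Hy. apply (start_only f n) in Hy; auto; lia.
            -- intro E0. rewrite E0 in Hy. apply (end_only f n) in Hy; auto; lia.
          * apply Rnot_le_lt. intro H. apply (Hmin (S k)); [lia|]. split; [lia|split; [lia|]].
            exists y. auto.
      - exists O. split; [lia|]. rewrite Q0. replace (Qp f i z 1%nat) with (f 2%nat) by (symmetry; apply QpL; lia).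
        apply seg_end. }
    destruct (on_line _ _ _ Hf01 Oz) as [s Es].
    assert (Hrel : orient (f 1%nat) (f 2%nat) z = (1 - s) * orient (f O) (f 1%nat) (f 2%nat)).
    { rewrite Es. unfold orient; rewrite ?px_lerp, ?py_lerp; ring. }
    assert (Hs1 : s <= 1) by nra.
    destruct (Rle_lt_dec 0 s) as [Hs0|Hs0].
    + destruct (Hss O i z) as [E _]; auto; try lia.
      rewrite Es. apply seg_intro with s; [lra|reflexivity].
    + apply Na. replace (f O) with (lerp z (f 1%nat) (-s/(1-s))).
      * apply EPz; auto. split.
        -- apply Rdiv_lt_0_compat; lra.
        -- apply Rmult_le_reg_r with (1-s); [lra|]. unfold Rdiv.
           rewrite Rmult_assoc, Rinv_l; lra.
      * rewrite Es. apply pt_eq; rewrite ?px_lerp, ?py_lerp; field; lra. }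
  assert (Ob : orient (f O) (f 1%nat) (f (pred n)) > 0).
  { apply (St1 (n-2)%nat); try lia. replace (S (n-2)) with (pred n) by lia. apply seg_end.
    intro E; apply Hf1b; auto. }
  assert (IH2 : forall y, onp (fun k => f (S k)) (pred n) y -> orient (f 1%nat) y (f (pred n)) >= 0).
  { intros y Hy.
    assert (Hc := IH (pred n) ltac:(lia) (fun k => f (S k)) (fun y => K y /\ orient (f O) (f 1%nat) y > 0)
       (simp_shift f n Hs Hn) (lturn_shift f n Hl) (half_convex K _ _ HK)).
    cbv beta in Hc. replace (S (pred (pred n))) with (pred n) in Hc by lia.
    apply Hc; auto.
    - apply EP_half. apply EP_in; auto. rewrite orient_aa; lra.
    - apply EP_half; auto. lra.
    - intros [_ H]. rewrite orient_aa in H. lra.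
    - intros [H _]. auto.
    - intros w [k [Hk Hw]] Hw1 Hwb. split.
      + apply Hin; auto. exists (S k); split; [lia|auto].
        intro E0. rewrite E0 in Hw. apply (start_only f n) in Hw; auto; lia.
      + apply (St1 (S k)); auto; lia. }
  intros x [i [Hi Hx]].
  destruct i as [|i].
  - destruct (seg_elim _ _ _ Hx) as [t [Ht ->]]. rewrite orient_lerp2, orient_a0. nra.
  - assert (Hx1 : orient (f 1%nat) x (f (pred n)) >= 0) by (apply IH2; exists i; split; [lia|auto]).
    destruct (classic (x = f 1%nat)) as [->|Hx1'].
    + lra.
    + assert (Ox := St1 (S i) x ltac:(lia) Hi Hx Hx1').
      apply Rnot_lt_ge. intro Hneg.
      apply Nb. apply (bary K (f O) (f 1%nat) x (f (pred n))); auto.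
      apply Hin. exists (S i); split; auto.
      * intro E; rewrite E in Ox. unfold orient in Ox. lra.
      * intro E; rewrite E, orient_aa in Hneg; lra.
Qed.

Lemma core n : CoreP n.
Proof.
  induction n as [n IH] using lt_wf_ind.
  intros f K Hs Hl HK Ea Eb Na Nb Hin x Hx.
  pose proof Hs as [H2 [Hd Hss]].
  destruct (Nat.eq_dec n 2) as [->|Hn].
  - destruct Hx as [i [Hi Hx]]. destruct i; [|lia].
    destruct (seg_elim _ _ _ Hx) as [t [Ht ->]]. simpl. unfold orient; rewrite ?px_lerp, ?py_lerp.
    right; ring.
  - assert (O12 := Hl 1%nat ltac:(lia) ltac:(lia)). simpl in O12.
    destruct (Rge_gt_or_eq_dec _ _ O12) as [Hp|H0].
    + eapply core_pos; eauto. lia.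
    + destruct (collinear_cases (f O) (f 1%nat) (f 2%nat)) as [[m [Hm E1]]|[[t [Ht E]]|[t [Ht E]]]];
        [apply Hd; lia|apply Hd; lia|exact H0| | |].
      * destruct (merge_ok f n m Hs ltac:(lia) Hm E1 Hl) as [S' [L' [On [M0 Me]]]].
        assert (Hc := IH (pred n) ltac:(lia) (mg f) K S' L' HK).
        rewrite M0, Me in Hc. apply Hc; auto.
        -- intros y Hy. apply Hin. apply On; auto.
        -- apply On; auto.
      * exfalso. destruct (Hss O 1%nat (f 2%nat)) as [_ E2]; try lia.
        rewrite E. apply seg_intro with t; [lra|reflexivity].
        apply seg_end. apply (Hd 1%nat); [lia|]. rewrite E2; reflexivity.
      * exfalso. destruct (Hss O 1%nat (f O)) as [_ E2]; try lia.
        apply seg_start. rewrite E. apply seg_intro with t; [lra|reflexivity].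
        apply (Hd O); [lia|]. exact E2.
Qed.

Lemma dist2_lerp u w c t :
  dist2 (lerp u w t) c = (1-t) * dist2 u c + t * dist2 w c - t*(1-t) * dist2 u w.
Proof. unfold dist2; rewrite px_lerp, py_lerp; ring. Qed.

Lemma dist2_pos u w : u <> w -> dist2 u w > 0.
Proof.
  intros H. unfold dist2.
  destruct (Req_dec (px u - px w) 0); destruct (Req_dec (py u - py w) 0).
  - exfalso; apply H; apply pt_eq; lra.
  - nra.
  - nra.
  - nra.
Qed.

Lemma dist2_ge0 u w : dist2 u w >= 0.
Proof. unfold dist2. apply Rle_ge; apply Rplus_le_le_0_compat; apply pow2_ge_0. Qed.

Lemma conv_lt a b D t R : a <= R -> b < R -> D >= 0 -> 0 < t <= 1 -> (1-t)*a + t*b - t*(1-t)*D < R.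
Proof.
  intros Ha Hb HD Ht.
  assert (H1 : (1-t)*(R-a) >= 0) by (apply Rle_ge, Rmult_le_pos; lra).
  assert (H2 : t*(R-b) > 0) by (apply Rmult_lt_0_compat; lra).
  assert (H3 : t*(1-t)*D >= 0) by (apply Rle_ge; apply Rmult_le_pos; [apply Rmult_le_pos|]; lra).
  lra.
Qed.

Lemma disk_convex c rho : convexK (in_open_disk c rho).
Proof.
  intros x y t Hx Hy Ht. unfold in_open_disk in *. rewrite dist2_lerp.
  assert (H := dist2_ge0 x y).
  destruct (Req_dec t 0) as [->|Ht0].
  - lra.
  - apply conv_lt; lra.
Qed.

Lemma disk_EP c rho e : on_circle c rho e -> EP (in_open_disk c rho) e.
Proof.
  intros He y t Hy Ht. unfold in_open_disk, on_circle in *. rewrite dist2_lerp.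
  assert (H := dist2_ge0 e y). apply conv_lt; lra.
Qed.

Section Inside.
Variables (f : nat -> point) (n : nat) (c : point) (rho : R) (q : point).
Hypothesis Hs : simp f n.
Hypothesis Hp : on_circle c rho (f O).
Hypothesis Hr : on_circle c rho (f (pred n)).
Hypothesis Hq : in_open_disk c rho q.
Hypothesis Hqp : onp f n q.
Hypothesis HC : forall x, onp f n x -> on_circle c rho x -> x = f O \/ x = f (pred n).

Definition gg (x : point) := dist2 x c - rho^2.

Lemma noint k t : (S k < n)%nat -> 0 < t < 1 -> gg (lerp (f k) (f (S k)) t) <> 0.
Proof.
  intros Hk Ht H0. pose proof Hs as [H2 [Hd Hss]].
  assert (Hon : onp f n (lerp (f k) (f (S k)) t)).
  { exists k. split; auto. apply seg_intro with t; [lra|reflexivity]. }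
  assert (Hseg : on_segment (f k) (f (S k)) (lerp (f k) (f (S k)) t))
    by (apply seg_intro with t; [lra|reflexivity]).
  destruct (HC _ Hon) as [E|E].
  - unfold on_circle, gg in *. lra.
  - rewrite E in Hseg. apply (start_only f n) in Hseg; auto. subst k.
    rewrite <- (lerp0 (f O) (f 1%nat)) in E at 2. apply lerp_inj in E; [lra|apply Hd; lia].
  - rewrite E in Hseg. apply (end_only f n) in Hseg; auto.
    rewrite <- Hseg in E. rewrite <- (lerp1 (f k) (f (S k))) in E at 2.
    apply lerp_inj in E; [lra|apply Hd; lia].
Qed.

Definition GG (k : nat) (t : R) : R :=
  (px (f k) + t * (px (f (S k)) - px (f k)) - px c)^2 +
  (py (f k) + t * (py (f (S k)) - py (f k)) - py c)^2 - rho^2.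

Lemma GG_eq k t : GG k t = gg (lerp (f k) (f (S k)) t).
Proof. reflexivity. Qed.

Lemma sign_change k t1 t2 : (S k < n)%nat -> 0 <= t1 -> t1 < t2 -> t2 <= 1 ->
  GG k t1 * GG k t2 < 0 -> False.
Proof.
  intros Hk H1 H12 H2 Hm.
  assert (Hc : continuity (GG k)) by (unfold GG; reg).
  assert (Hz : exists z, t1 <= z <= t2 /\ GG k z = 0).
  { destruct (Rlt_le_dec (GG k t1) 0).
    - assert (GG k t2 > 0) by nra.
      destruct (IVT (GG k) t1 t2 Hc H12) as [z Hz]; auto. exists z; auto.
    - assert (GG k t1 > 0) by (destruct r; [lra| rewrite <- H in Hm; lra]).
      assert (GG k t2 < 0) by nra.
      destruct (IVT (fun t => - GG k t) t1 t2) as [z [Hz1 Hz2]]; auto.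
      + apply continuity_opp; auto.
      + lra.
      + lra.
      + exists z; split; auto; lra. }
  destruct Hz as [z [Hz1 Hz2]].
  assert (z <> t1) by (intro E; subst; rewrite Hz2 in Hm; lra).
  assert (z <> t2) by (intro E; subst; rewrite Hz2 in Hm; lra).
  apply (noint k z); auto. lra.
Qed.

Lemma vert_ne j : (0 < j)%nat -> (j < pred n)%nat -> gg (f j) <> 0.
Proof.
  intros Hj1 Hj2 H0. pose proof Hs as [H2 [Hd Hss]].
  assert (Hon : onp f n (f j)) by (exists j; split; [lia|apply seg_start]).
  destruct (HC _ Hon) as [E|E].
  - unfold on_circle, gg in *; lra.
  - assert (HH : on_segment (f j) (f (S j)) (f O)) by (rewrite <- E; apply seg_start).
    apply (start_only f n) in HH; auto; lia.
  - assert (HH : on_segment (f j) (f (S j)) (f (pred n))) by (rewrite <- E; apply seg_start).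
    assert (HH2 := end_only f n j Hs ltac:(lia) HH). apply (Hd j); [lia|]. rewrite E, HH2. reflexivity.
Qed.

Lemma gg0 : gg (f O) = 0.
Proof. unfold gg, on_circle in *; lra. Qed.
Lemma ggn : gg (f (pred n)) = 0.
Proof. unfold gg, on_circle in *; lra. Qed.

Lemma adj_sign j : (S j < n)%nat -> gg (f j) * gg (f (S j)) < 0 -> False.
Proof.
  intros Hj Hm. apply (sign_change j 0 1); auto; try lra.
  rewrite !GG_eq, lerp0, lerp1. exact Hm.
Qed.

Lemma all_pos j : (0 < j)%nat -> (j < pred n)%nat -> gg (f j) > 0 ->
  forall m, (0 < m)%nat -> (m < pred n)%nat -> gg (f m) > 0.
Proof.
  intros Hj1 Hj2 Hg.
  assert (Fw : forall d, (j + d < pred n)%nat -> gg (f (j + d)%nat) > 0).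
  { induction d as [|d IHd]; intros Hd'.
    - rewrite Nat.add_0_r; auto.
    - assert (H1 := IHd ltac:(lia)). assert (H2 := vert_ne (j + S d) ltac:(lia) Hd').
      destruct (Rlt_le_dec 0 (gg (f (j + S d)%nat))); [lra|].
      exfalso. apply (adj_sign (j + d)); [lia|]. replace (S (j + d)) with (j + S d)%nat by lia. nra. }
  assert (Bw : forall d, (d < j)%nat -> gg (f (j - d)%nat) > 0).
  { induction d as [|d IHd]; intros Hd'.
    - rewrite Nat.sub_0_r; auto.
    - assert (H1 := IHd ltac:(lia)). assert (H2 := vert_ne (j - S d) ltac:(lia) ltac:(lia)).
      destruct (Rlt_le_dec 0 (gg (f (j - S d)%nat))); [lra|].
      exfalso. apply (adj_sign (j - S d)); [lia|]. replace (S (j - S d)) with (j - d)%nat by lia. nra. }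
  intros m Hm1 Hm2. destruct (le_lt_dec j m).
  - replace m with (j + (m - j))%nat by lia. apply Fw; lia.
  - replace m with (j - (j - m))%nat by lia. apply Bw; lia.
Qed.

Lemma vert_neg m : (0 < m)%nat -> (m < pred n)%nat -> gg (f m) < 0.
Proof.
  intros Hm1 Hm2. destruct (Rlt_le_dec (gg (f m)) 0) as [H|H]; auto. exfalso.
  assert (Hpos : gg (f m) > 0) by (assert (H0 := vert_ne m Hm1 Hm2); lra).
  assert (AP := all_pos m Hm1 Hm2 Hpos).
  destruct Hqp as [k [Hk Hqk]]. destruct (seg_elim _ _ _ Hqk) as [tq [Htq Eq]].
  assert (Hgq : gg q < 0) by (unfold gg, in_open_disk in *; lra).
  rewrite Eq, <- GG_eq in Hgq.
  destruct k as [|k].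
  - assert (H1 : gg (f 1%nat) > 0) by (apply AP; lia).
    assert (tq < 1).
    { destruct (Req_dec tq 1) as [->|]; [|lra]. rewrite GG_eq, lerp1 in Hgq. lra. }
    apply (sign_change O tq 1); auto; try lra.
    rewrite (GG_eq O 1), lerp1. nra.
  - assert (H1 : gg (f (S k)) > 0) by (apply AP; lia).
    assert (tq > 0).
    { destruct (Req_dec tq 0) as [->|]; [|lra]. rewrite GG_eq, lerp0 in Hgq. lra. }
    apply (sign_change (S k) 0 tq); auto; try lra.
    rewrite (GG_eq (S k) 0), lerp0. nra.
Qed.

Lemma vert_le m : (m < n)%nat -> gg (f m) <= 0.
Proof.
  intros Hm. destruct (Nat.eq_dec m 0) as [->|H0]. rewrite gg0; lra.
  destruct (Nat.eq_dec m (pred n)) as [->|H1]. rewrite ggn; lra.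
  left. apply vert_neg; lia.
Qed.

Lemma inside x : onp f n x -> x <> f O -> x <> f (pred n) -> in_open_disk c rho x.
Proof.
  intros [k [Hk Hx]] H0 Hn. pose proof Hs as [H2 [Hd Hss]].
  destruct (seg_elim _ _ _ Hx) as [t [Ht ->]].
  unfold in_open_disk. cut (gg (lerp (f k) (f (S k)) t) < 0); [unfold gg; lra|].
  assert (Hid : gg (lerp (f k) (f (S k)) t) =
     (1-t) * gg (f k) + t * gg (f (S k)) - t*(1-t) * dist2 (f k) (f (S k)))
    by (unfold gg; rewrite dist2_lerp; ring).
  assert (Hu := vert_le k ltac:(lia)). assert (Hw := vert_le (S k) ltac:(lia)).
  destruct (Req_dec t 0) as [->|Ht0].
  - rewrite lerp0 in *. apply vert_neg; [|lia].
    destruct k; [exfalso; apply H0; reflexivity| lia].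
  - destruct (Req_dec t 1) as [->|Ht1].
    + rewrite lerp1 in *. apply vert_neg; [lia|].
      destruct (Nat.eq_dec (S k) (pred n)) as [E|E]; [exfalso; apply Hn; rewrite E; reflexivity|lia].
    + rewrite Hid. assert (HD := dist2_pos (f k) (f (S k)) (Hd k Hk)).
      assert (H3 : t*(1-t)*dist2 (f k) (f (S k)) > 0)
        by (apply Rmult_lt_0_compat; [apply Rmult_lt_0_compat|]; lra).
      assert (H4 : (1-t) * (- gg (f k)) >= 0) by (apply Rle_ge, Rmult_le_pos; lra).
      assert (H5 : t * (- gg (f (S k))) >= 0) by (apply Rle_ge, Rmult_le_pos; lra).
      lra.
Qed.
End Inside.

Lemma main_cw f n c rho q : on_circle c rho (f O) -> on_circle c rho (f (pred n)) ->
  in_open_disk c rho q -> simp f n -> onp f n q ->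
  (forall x, onp f n x -> on_circle c rho x -> x = f O \/ x = f (pred n)) ->
  lturn f n -> orient (f O) q (f (pred n)) >= 0.
Proof.
  intros Hp Hr Hq Hs Hqp HC Hl.
  apply (core n f (in_open_disk c rho)); auto.
  - apply disk_convex.
  - apply disk_EP; auto.
  - apply disk_EP; auto.
  - unfold in_open_disk, on_circle in *; lra.
  - unfold in_open_disk, on_circle in *; lra.
  - apply (inside f n c rho q); auto.
Qed.

Definition rf (x : point) : point := (px x, - py x).
Lemma rf_px x : px (rf x) = px x. Proof. reflexivity. Qed.
Lemma rf_py x : py (rf x) = - py x. Proof. reflexivity. Qed.
Lemma rf_rf x : rf (rf x) = x.
Proof. apply pt_eq; rewrite ?rf_px, ?rf_py; ring. Qed.
Lemma rf_inj x y : rf x = rf y -> x = y.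
Proof. intros E. rewrite <- (rf_rf x), <- (rf_rf y), E. reflexivity. Qed.

Lemma seg_rf u w x : on_segment (rf u) (rf w) x -> on_segment u w (rf x).
Proof.
  intros H. destruct (seg_elim _ _ _ H) as [t [Ht ->]]. apply seg_intro with t; auto.
  apply pt_eq; rewrite ?rf_px, ?rf_py, ?px_lerp, ?py_lerp, ?rf_px, ?rf_py; ring.
Qed.
Lemma seg_rf' u w x : on_segment u w x -> on_segment (rf u) (rf w) (rf x).
Proof.
  intros H. destruct (seg_elim _ _ _ H) as [t [Ht ->]]. apply seg_intro with t; auto.
  apply pt_eq; rewrite ?rf_px, ?rf_py, ?px_lerp, ?py_lerp, ?rf_px, ?rf_py; ring.
Qed.
Lemma dist2_rf x y : dist2 (rf x) (rf y) = dist2 x y.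
Proof. unfold dist2; rewrite ?rf_px, ?rf_py; ring. Qed.
Lemma orient_rf a b c : orient (rf a) (rf b) (rf c) = - orient a b c.
Proof. unfold orient; rewrite ?rf_px, ?rf_py; ring. Qed.

Lemma main_ccw f n c rho q : on_circle c rho (f O) -> on_circle c rho (f (pred n)) ->
  in_open_disk c rho q -> simp f n -> onp f n q ->
  (forall x, onp f n x -> on_circle c rho x -> x = f O \/ x = f (pred n)) ->
  (forall i, (0 < i)%nat -> (S i < n)%nat -> orient (f (pred i)) (f i) (f (S i)) <= 0) ->
  orient (f O) q (f (pred n)) <= 0.
Proof.
  intros Hp Hr Hq Hs Hqp HC Hl.
  set (g := fun i => rf (f i)).
  assert (Hg := main_cw g n (rf c) rho (rf q)).
  unfold g in Hg. rewrite orient_rf in Hg.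
  cut (- orient (f O) q (f (pred n)) >= 0); [lra|]. apply Hg.
  - unfold on_circle in *. rewrite dist2_rf; auto.
  - unfold on_circle in *. rewrite dist2_rf; auto.
  - unfold in_open_disk in *. rewrite dist2_rf; auto.
  - destruct Hs as [H2 [Hd Hss]]. split; [auto|split].
    + intros i Hi E. apply (Hd i Hi). apply rf_inj; auto.
    + intros i j x Hij Hj H1 H2'. apply seg_rf in H1. apply seg_rf in H2'.
      destruct (Hss i j (rf x)) as [E E']; auto. split; auto.
      rewrite <- (rf_rf x), E'. reflexivity.
  - destruct Hqp as [i [Hi Hx]]. exists i. split; auto. apply seg_rf'; auto.
  - intros x [i [Hi Hx]] Hc. apply seg_rf in Hx.
    destruct (HC (rf x)) as [E|E].
    + exists i; split; auto.
    + unfold on_circle in *. rewrite <- (rf_rf c), dist2_rf; auto.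
    + left. rewrite <- (rf_rf x), E. reflexivity.
    + right. rewrite <- (rf_rf x), E. reflexivity.
  - intros i Hi Hi2. rewrite orient_rf. assert (H := Hl i Hi Hi2). lra.
Qed.

Theorem lemma10 (c : point) (rho : R) (p q r : point) (vs : list point) :
  0 < rho ->
  on_circle c rho p -> on_circle c rho r -> in_open_disk c rho q ->
  simple_path vs ->
  vtx vs 0 = p -> vtx vs (pred (length vs)) = r ->
  on_path vs q ->
  (forall x, on_path vs x -> on_circle c rho x -> x = p \/ x = r) ->
  (cw_turn p q r -> has_cw_vertex vs) /\ (ccw_turn p q r -> has_ccw_vertex vs).
Proof.
  intros Hrho Hp Hr Hq Hs E0 En Hqp HC.
  change (simp (vtx vs) (length vs)) in Hs.
  change (onp (vtx vs) (length vs) q) in Hqp.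
  assert (HC' : forall x, onp (vtx vs) (length vs) x -> on_circle c rho x ->
             x = vtx vs O \/ x = vtx vs (pred (length vs))).
  { intros x Hx Hc. rewrite E0, En. apply HC; auto. }
  rewrite <- E0 in Hp. rewrite <- En in Hr. rewrite <- E0, <- En.
  split.
  - intros Hcw. apply NNPP. intros Hno.
    assert (Hl : lturn (vtx vs) (length vs)).
    { intros i Hi Hi2. apply Rnot_lt_ge. intro H. apply Hno. exists i. auto. }
    assert (H := main_cw _ _ c rho q Hp Hr Hq Hs Hqp HC' Hl).
    unfold cw_turn in Hcw. lra.
  - intros Hccw. apply NNPP. intros Hno.
    assert (Hl : forall i, (0 < i)%nat -> (S i < length vs)%nat ->
               orient (vtx vs (pred i)) (vtx vs i) (vtx vs (S i)) <= 0).
    { intros i Hi Hi2. apply Rnot_lt_le. intro H. apply Hno. exists i. auto. }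
    assert (H := main_ccw _ _ c rho q Hp Hr Hq Hs Hqp HC' Hl).
    unfold ccw_turn in Hccw. lra.
Qed.
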